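(* Let $f\in\omega^{\subset\omega}$, let $n,m\geq 1$, let $U$ be an $(n+m-1)$-branching set of extensions of $f$, and let $R\subseteq U$. Then either there is an $n$-branching set of extensions of $f$ contained in $R$, or there is an $m$-branching set of extensions of $f$ contained in $U\setminus R$.
   Context: $\omega^{\subset\omega}$ is the set of partial functions from $\omega$ to $\omega$ with finite domain. For $f\in\omega^{\subset\omega}$, an $n$-branching set of extensions of $f$ of length $k$ is defined by induction on $k$: of length $1$, it is a set $U$ of $n$ functions such that for some fixed $x\notin\operatorname{dom}(f)$ each $g\in U$ satisfies $f\subseteq g$ and $\operatorname{dom}(g)=\operatorname{dom}(f)\cup\{x\}$; if $U_0$ is an $n$-branching set of extensions of $f$ of length $k$ and for each $g\in U_0$, $U_g$ is an $n$-branching set of extensions of $g$ of length $1$, then $\bigcup_{g\in U_0}U_g$ is an $n$-branching set of extensions of $f$ of length $k+1$. An $n$-branching set of extensions is one of some length $k\geq1$. *)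

(* Defs.v *)
From mathcomp Require Import all_boot.
From mathcomp Require Import finmap.
Set Implicit Arguments. Unset Strict Implicit. Unset Printing Implicit Defensive.
Local Open Scope fset_scope.
Local Open Scope fmap_scope.

(* omega^{subset omega}: partial functions nat -> nat with finite domain *)
Definition pfun := {fmap nat -> nat}.

Definition pf_extends (f g : pfun) : Prop :=
  forall x, x \in domf f -> g.[? x] = f.[? x].

Inductive branching (n : nat) : pfun -> nat -> {fset pfun} -> Prop :=
| branching_one (f : pfun) (x : nat) (U : {fset pfun}) :
    x \notin domf f ->
    #|` U| = n ->
    (forall g, g \in U -> pf_extends f g /\ domf g = x |` domf f) ->
    branching n f 1 U
| branching_succ (f : pfun) (k : nat) (U0 : {fset pfun}) (Ug : pfun -> {fset pfun}) :
    branching n f k U0 ->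
    (forall g, g \in U0 -> branching n g 1 (Ug g)) ->
    branching n f k.+1 (\bigcup_(g <- U0) Ug g).

Definition is_branching (n : nat) (f : pfun) (U : {fset pfun}) : Prop :=
  exists k, 1 <= k /\ branching n f k U.

(* Main.v *)
Require Import Defs.
From mathcomp Require Import all_boot.
From mathcomp Require Import finmap.
From mathcomp Require Import zify.
Local Open Scope fset_scope.
Set Implicit Arguments.

Lemma sub_card (T : choiceType) (A : {fset T}) n :
  n <= #|` A| -> exists B : {fset T}, B `<=` A /\ #|` B| = n.
Proof.
move=> hn; exists [fset x in take n (enum_fset A)]; split.
  apply/fsubsetP=> x; rewrite in_fset /= => /mem_take.
  by [].
by rewrite card_fseq undup_id ?size_takel // take_uniq // fset_uniq.
Qed.

Lemma branching_pos N f k U : branching N f k U -> 0 < k.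
Proof. by case. Qed.

Lemma branching_one_inv N f U : branching N f 1 U ->
  exists x, x \notin domf f /\ #|` U| = N /\
    (forall g, g \in U -> pf_extends f g /\ domf g = x |` domf f).
Proof.
move=> h; inversion h; subst.
  by exists x.
by have := branching_pos H0.
Qed.

Lemma branching_one_sub N n f U V : branching N f 1 U -> V `<=` U -> #|` V| = n ->
  branching n f 1 V.
Proof.
move=> /branching_one_inv [x [hx [hc hg]]] hVU hV.
apply: (branching_one hx hV) => g gV; apply: hg; exact: (fsubsetP hVU).
Qed.

Lemma main_lemma N f k U : branching N f k U ->
  forall n m (R : {fset pfun}), 1 <= n -> 1 <= m -> n + m - 1 = N -> R `<=` U ->
  (exists V : {fset pfun}, V `<=` R /\ is_branching n f V) \/
  (exists W : {fset pfun}, W `<=` U `\` R /\ is_branching m f W).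
Proof.
elim=> {f k U}.
- move=> f x U hx hU hg n m R hn hm hN hR.
  have hb : branching N f 1 U by apply: branching_one hx hU hg.
  have := cardfsID R U; rewrite hU -hN => hsum.
  case: (leqP n #|` U `&` R|) => hI.
    have [B [hB hBc]] := @sub_card _ _ _ hI.
    left; exists B; split; first exact: fsubset_trans hB (fsubsetIr _ _).
    exists 1; split => //; apply: branching_one_sub hb (fsubset_trans hB (fsubsetIl _ _)) hBc.
  have hD : m <= #|` U `\` R| by lia.
  have [B [hB hBc]] := @sub_card _ _ _ hD.
  right; exists B; split => //.
  exists 1; split => //; apply: branching_one_sub hb (fsubset_trans hB (fsubsetDl _ _)) hBc.
- move=> f k U0 Ug hU0 IH hUg _ n m R hn hm hN hR.
  pose R0 := [fset g in U0 | n <= #|` Ug g `&` R|].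
  have hR0 : R0 `<=` U0 by apply/fsubsetP=> g; rewrite in_fset /= => /andP[].
  have hgsub : forall g, g \in U0 -> Ug g `<=` \bigcup_(g <- U0) Ug g.
    by move=> g gU; apply: bigfcup_sup.
  case: (IH n m R0 hn hm hN hR0).
  + move=> [V0 [hV0 [k' [hk' hb]]]]; left.
    pose Vg g := [fset x in take n (enum_fset (Ug g `&` R))].
    have hVg : forall g, g \in V0 -> Vg g `<=` Ug g `&` R /\ #|` Vg g| = n.
      move=> g gV; have := fsubsetP hV0 g gV; rewrite in_fset /= => /andP[_ hc].
      split.
        by apply/fsubsetP=> x; rewrite in_fset /= => /mem_take.
      by rewrite card_fseq undup_id ?size_takel // take_uniq // fset_uniq.
    exists (\bigcup_(g <- V0) Vg g); split.
      apply/bigfcupsP=> g gV _; have [h1 _] := hVg g gV.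
      exact: fsubset_trans h1 (fsubsetIr _ _).
    exists k'.+1; split => //; apply: branching_succ hb _ => g gV.
    have gU : g \in U0 by apply: (fsubsetP hR0); apply: (fsubsetP hV0).
    have [h1 h2] := hVg g gV.
    exact: branching_one_sub (hUg g gU) (fsubset_trans h1 (fsubsetIl _ _)) h2.
  + move=> [W0 [hW0 [k' [hk' hb]]]]; right.
    have hWg : forall g, g \in W0 -> g \in U0 /\ m <= #|` Ug g `\` R|.
      move=> g gW; have := fsubsetP hW0 g gW; rewrite in_fsetD in_fset /= => /andP[h1 h2].
      split => //; have hlt : #|` Ug g `&` R| < n.
        by rewrite ltnNge; apply/negP => hc; move/negP: h1; apply; rewrite !inE /=; apply/andP.
      have [x0 [_ [hc _]]] := branching_one_inv (hUg g h2).
      have := cardfsID R (Ug g); rewrite hc => hs; move: hs hlt; set I := #|` Ug g `&` R|; set D := #|` Ug g `\` R|; lia.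
    pose Wg g := [fset x in take m (enum_fset (Ug g `\` R))].
    have hWg2 : forall g, g \in W0 -> Wg g `<=` Ug g `\` R /\ #|` Wg g| = m.
      move=> g gW; have [_ hc] := hWg g gW.
      split.
        by apply/fsubsetP=> x; rewrite in_fset /= => /mem_take.
      by rewrite card_fseq undup_id ?size_takel // take_uniq // fset_uniq.
    exists (\bigcup_(g <- W0) Wg g); split.
      apply/bigfcupsP=> g gW _; have [h1 _] := hWg2 g gW; have [gU _] := hWg g gW.
      apply: fsubset_trans h1 _; apply/fsubsetP=> x /fsetDP[xU xR].
      apply/fsetDP; split => //; exact: (fsubsetP (hgsub g gU)).
    exists k'.+1; split => //; apply: branching_succ hb _ => g gW.
    have [gU _] := hWg g gW; have [h1 h2] := hWg2 g gW.
    exact: branching_one_sub (hUg g gU) (fsubset_trans h1 (fsubsetDl _ _)) h2.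
Qed.

Unset Implicit Arguments.

Theorem mainTheorem7 (f : pfun) (n m : nat) (U R : {fset pfun}) :
  1 <= n -> 1 <= m ->
  is_branching (n + m - 1) f U ->
  R `<=` U ->
  (exists V : {fset pfun}, V `<=` R /\ is_branching n f V) \/
  (exists W : {fset pfun}, W `<=` U `\` R /\ is_branching m f W).
Proof.
move=> hn hm [k [_ hb]] hR.
by apply: (main_lemma hb).
Qed.
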